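(* The average variance of the entries of $\mathcal Q(\tilde X)$, namely $\frac1{N^2}\sum_{k_1,k_2}\operatorname{var}\big(\mathcal Q(\tilde X)[k_1,k_2]\big)$, is $O(M^2/N^2)$.
   Context: $M,N$ positive integers with $N>2M$; $g$ is a real $M\times M$ image with values in $[0,255]$ zero-padded to $N\times N$, $\tilde g=\tilde g_R+j\tilde g_I$ its $N\times N$ 2D-DFT $\mathfrak F(g)$; $\tilde X=\tilde X_R+j\tilde X_I$ with $\tilde X_R=\mathbb 1(\tilde g_R+W_R+d_R>0)-\tfrac12$, $\tilde X_I=\mathbb 1(\tilde g_I+W_I+d_I>0)-\tfrac12$ entrywise, where $W_R,W_I$ have independent entries of zero-mean noise of known distribution symmetric about $0$ and $d_R,d_I$ are independent AWGN dither. $\mathcal Q(\tilde h)=\mathfrak F(\textsc{Clip}(\textsc{Proj}(\mathfrak F^{-1}(\tilde h))))$, where $\textsc{Proj}$ zeroes spatial-domain pixels outside the $M^2$-pixel image block and $\textsc{Clip}$ clips pixel values to $[0,255]$. *)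

(* Defs.v *)
From HB Require Import structures.
From mathcomp Require Import all_boot all_order all_algebra.
From mathcomp Require Import complex.
From mathcomp Require Import all_classical all_reals all_analysis.

Set Implicit Arguments.
Unset Strict Implicit.
Unset Printing Implicit Defensive.

Import Order.TTheory GRing.Theory Num.Theory.
Local Open Scope classical_set_scope.
Local Open Scope ring_scope.

Definition expi (R : realType) (t : R) : R[i] := (cos t +i* sin t)%C.

Definition dft2 (R : realType) (N : nat) (h : 'M[R[i]]_N) : 'M[R[i]]_N :=
  \matrix_(k1 < N, k2 < N) \sum_(n1 < N) \sum_(n2 < N)
     (h n1 n2 * expi (- (2 * pi * ((k1 * n1 + k2 * n2)%N)%:R / N%:R))).

Definition idft2 (R : realType) (N : nat) (h : 'M[R[i]]_N) : 'M[R[i]]_N :=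
  \matrix_(n1 < N, n2 < N) ((((N ^ 2)%:R)^-1 : R)%:C%C *
     \sum_(k1 < N) \sum_(k2 < N)
       (h k1 k2 * expi (2 * pi * ((k1 * n1 + k2 * n2)%N)%:R / N%:R))).

(* Proj: zero every pixel outside the M x M image block (top-left corner,
   where the M x M image sits after zero padding). *)
Definition proj_blk (R : realType) (N M : nat) (h : 'M[R[i]]_N) : 'M[R[i]]_N :=
  \matrix_(i < N, j < N) if ((i < M) && (j < M))%N then h i j else 0.

Definition clip (R : realType) (x : R) : R := Num.min 255 (Num.max 0 x).

Definition clip_img (R : realType) (N : nat) (h : 'M[R[i]]_N) : 'M[R[i]]_N :=
  \matrix_(i < N, j < N) (clip (complex.Re (h i j)))%:C%C.

Definition Qop (R : realType) (N M : nat) (h : 'M[R[i]]_N) : 'M[R[i]]_N :=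
  dft2 (clip_img (proj_blk M (idft2 h))).

Definition sgnbit (R : realType) (x : R) : R := (if 0 < x then 1 else 0) - 2^-1.

Definition Xtilde (R : realType) (N : nat) (T : Type) (gt : 'M[R[i]]_N)
  (WR WI dR dI : 'I_N -> 'I_N -> T -> R) (w : T) : 'M[R[i]]_N :=
  \matrix_(k1 < N, k2 < N)
    (sgnbit (complex.Re (gt k1 k2) + WR k1 k2 w + dR k1 k2 w)
     +i* sgnbit (complex.Im (gt k1 k2) + WI k1 k2 w + dI k1 k2 w))%C.

Definition img_dft (R : realType) (N : nat) (g : 'M[R]_N) : 'M[R[i]]_N :=
  dft2 (map_mx (fun x => x%:C%C) g).

(* variance of a complex random variable: E|Z - EZ|^2 = var(Re Z) + var(Im Z) *)
Definition cvariance d (T : measurableType d) (R : realType) (P : probability T R)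
  (Z : T -> R[i]) : \bar R :=
  ('V_P[fun w => complex.Re (Z w)] + 'V_P[fun w => complex.Im (Z w)])%E.

Definition mutually_independent d (T : measurableType d) (R : realType)
  (P : probability T R) (I : finType) (X : I -> T -> R) : Prop :=
  forall B : I -> set R, (forall i, measurable (B i)) ->
    P (\bigcap_(i in [set: I]) (X i @^-1` B i)) =
    (\prod_(i : I) P (X i @^-1` B i))%E.

Definition noise_family (R : realType) (N : nat) (T : Type)
  (WR WI dR dI : 'I_N -> 'I_N -> T -> R) (t : 'I_4 * 'I_N * 'I_N) : T -> R :=
  match val t.1.1 with
  | 0 => WR t.1.2 t.2
  | 1 => WI t.1.2 t.2
  | 2 => dR t.1.2 t.2
  | _ => dI t.1.2 t.2
  end.

Definition symmetric_law (R : realType) (mu : probability R R) : Prop :=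
  forall A : set R, measurable A -> mu [set - x | x in A] = mu A.

(* Main.v *)
Require Import Defs.
From HB Require Import structures.
From mathcomp Require Import all_boot all_order all_algebra.
From mathcomp Require Import complex.
From mathcomp Require Import all_classical all_reals all_analysis.
From mathcomp Require Import measurable_realfun ring lra zify.
Import Order.TTheory GRing.Theory Num.Theory.
Local Open Scope classical_set_scope.
Local Open Scope ring_scope.

Section Er.
Context {d} {T : measurableType d} {R : realType} {P : probability T R}.

Definition bmf (f : T -> R) :=
  measurable_fun setT f /\ exists c : R, forall w, `|f w| <= c.

Lemma bmf_L1 {f} : bmf f -> f \in Lfun P 1.
Proof.
move=> [mf [c hc]]; apply/Lfun1_integrable.
apply: measurable_bounded_integrable => //.
  by apply: (le_lt_trans (probability_le1 P measurableT)); rewrite ltry.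
exists c; split; first exact: num_real.
by move=> x cx y _ /=; rewrite (le_trans (hc y))// ltW.
Qed.

Definition Er f := fine (('E_P[f])%E).

Lemma ErE {f} : bmf f -> ('E_P[f])%E = (Er f)%:E.
Proof. by move=> /bmf_L1 h; rewrite /Er fineK// expectation_fin_num. Qed.

Lemma bmf_cst c : bmf (fun _ => c).
Proof. by split=> //; exists `|c|. Qed.

Lemma bmf_add {f g} : bmf f -> bmf g -> bmf (fun w => f w + g w).
Proof.
move=> [mf [c hc]] [mg [c' hc']]; split; first exact: measurable_funD.
by exists (c + c') => w; rewrite (le_trans (ler_normD _ _))// lerD.
Qed.

Lemma bmf_mul {f g} : bmf f -> bmf g -> bmf (fun w => f w * g w).
Proof.
move=> [mf [c hc]] [mg [c' hc']]; split; first exact: measurable_funM.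
exists (c * c') => w; rewrite normrM ler_pM//.
Qed.

Lemma bmf_scale k {f} : bmf f -> bmf (fun w => k * f w).
Proof. by move=> hf; apply: bmf_mul => //; exact: bmf_cst. Qed.

Lemma bmf_opp {f} : bmf f -> bmf (fun w => - f w).
Proof.
move=> hf; have := bmf_scale (-1) hf.
by congr bmf; apply/funext => w; rewrite mulN1r.
Qed.

Lemma bmf_sum (I : Type) (s : seq I) (F : I -> T -> R) :
  (forall i, bmf (F i)) -> bmf (fun w => \sum_(i <- s) F i w).
Proof.
move=> hF; elim: s => [|a s IH].
  by under eq_fun do rewrite big_nil; exact: bmf_cst.
by under eq_fun do rewrite big_cons; exact: bmf_add.
Qed.

Lemma Er_cst c : Er (fun _ => c) = c.
Proof. by rewrite /Er -[fun _ => c]/(cst c) expectation_cst. Qed.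

Lemma Er_add {f g} : bmf f -> bmf g -> Er (fun w => f w + g w) = Er f + Er g.
Proof.
move=> hf hg; have := expectationD (bmf_L1 hf) (bmf_L1 hg).
by rewrite /= (ErE hf) (ErE hg) => h; rewrite /Er h.
Qed.

Lemma Er_scale k {f} : bmf f -> Er (fun w => k * f w) = k * Er f.
Proof.
move=> hf; have := expectationZl k (bmf_L1 hf).
by rewrite (ErE hf) => h; rewrite /Er (_ : (fun w => _) = (k \o* f)%R) ?h//; apply/funext => w /=; rewrite mulrC.
Qed.

Lemma Er_opp {f} : bmf f -> Er (fun w => - f w) = - Er f.
Proof.
move=> hf; rewrite -mulN1r -Er_scale//.
by congr Er; apply/funext => w; rewrite mulN1r.
Qed.

Lemma Er_sum (I : Type) (s : seq I) (F : I -> T -> R) :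
  (forall i, bmf (F i)) ->
  Er (fun w => \sum_(i <- s) F i w) = \sum_(i <- s) Er (F i).
Proof.
move=> hF; elim: s => [|a s IH].
  by under eq_fun do rewrite big_nil; rewrite big_nil Er_cst.
under eq_fun do rewrite big_cons; rewrite big_cons Er_add ?IH//.
exact: bmf_sum.
Qed.

Lemma Er_ge0 {f} : bmf f -> (forall w, 0 <= f w) -> 0 <= Er f.
Proof.
move=> hf h; have := expectation_ge0 P h.
by rewrite (ErE hf) lee_fin.
Qed.

Lemma Er_le {f g} : bmf f -> bmf g -> (forall w, f w <= g w) -> Er f <= Er g.
Proof.
move=> hf hg h; rewrite -subr_ge0 -Er_opp// -Er_add//; last exact: bmf_opp.
by apply: Er_ge0 => [|w]; [apply: bmf_add => //; exact: bmf_opp|rewrite subr_ge0].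
Qed.

Lemma Er_indic (A : set T) : measurable A -> Er (\1_A) = fine (P A).
Proof. by move=> mA; rewrite /Er expectation_indic. Qed.

Lemma bmf_indic (A : set T) : measurable A -> bmf (\1_A).
Proof.
move=> mA; split; first exact: measurable_indic.
by exists 1 => w; rewrite /indic; case: (_ \in _); rewrite ?normr1 ?normr0.
Qed.

Definition Var f := Er (fun w => (f w - Er f) ^+ 2).
Definition Cov f g := Er (fun w => f w * g w) - Er f * Er g.

Lemma VarE {f} : bmf f -> ('V_P[f])%E = (Var f)%:E.
Proof.
move=> hf; rewrite /variance unlock -/(expectation P _) ErE.
  by rewrite /Var; congr (Er _)%:E; apply/funext => w; rewrite /= expr2.
have h : bmf (fun w => (f w - Er f) * (f w - Er f)).
  by apply: bmf_mul; apply: bmf_add => //; exact: bmf_cst.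
exact: h.
Qed.

Lemma Er_sq_shift {f} c : bmf f ->
  Er (fun w => (f w - c) ^+ 2) = Var f + (Er f - c) ^+ 2.
Proof.
move=> hf.
have e : (fun w => (f w - c) ^+ 2) = (fun w => (f w - Er f) ^+ 2 +
   ((2 * (Er f - c)) * f w + ((Er f - c)^+2 - 2 * (Er f - c) * Er f))).
  by apply/funext => w; ring.
have bs : bmf (fun w => (f w - Er f) ^+ 2).
  by under eq_fun do rewrite expr2; apply: bmf_mul; apply: bmf_add => //; exact: bmf_cst.
rewrite e Er_add//; last by apply: bmf_add; [exact: bmf_scale|exact: bmf_cst].
rewrite Er_add//; [|exact: bmf_scale|exact: bmf_cst].
rewrite Er_scale// Er_cst /Var; ring.
Qed.

Lemma Var_le {f} c : bmf f -> Var f <= Er (fun w => (f w - c) ^+ 2).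
Proof. by move=> hf; rewrite Er_sq_shift// lerDl sqr_ge0. Qed.

Lemma Var_Cov {f} : bmf f -> Var f = Cov f f.
Proof.
move=> hf; have := Er_sq_shift 0 hf.
rewrite subr0; under eq_fun do rewrite subr0 expr2.
by rewrite /Cov => ->; rewrite expr2; ring.
Qed.

End Er.
Arguments bmf {d T R} f.
Arguments Er {d T R} P f.
Arguments Var {d T R} P f.
Arguments Cov {d T R} P f g.

Definition pfm d d' (T1 : measurableType d) (T2 : measurableType d') (R : realFieldType)
  (m : measure T1 R) (f : T1 -> T2) (mf : measurable_fun setT f) : measure T2 R :=
  measure_function_pushforward__canonical__measure_function_Measure m mf.
Arguments pfm {d d' T1 T2 R} m {f} mf.

Section ext.
Context (R : realType).

Lemma ext_rect (m1 m2 : measure (R * R)%type R) : (m1 setT < +oo)%E ->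
  (forall A B, measurable A -> measurable B -> m1 (A `*` B) = m2 (A `*` B)) ->
  forall S, measurable S -> m1 S = m2 S.
Proof.
move=> m1oo h S mS.
apply: (measure_unique [set A `*` B | A in measurable & B in measurable] (fun _ => setT)) => //.
- exact: measurable_prod_measurableType.
- move=> _ _ [A mA [B mB <-]] [A' mA' [B' mB' <-]].
  exists (A `&` A'); first exact: measurableI.
  by exists (B `&` B'); [exact: measurableI| rewrite setXI].
- by move=> _; exists setT => //; exists setT => //; rewrite setXTT.
- by rewrite bigcup_const.
- by move=> _ [A mA [B mB <-]]; exact: h.
Qed.

End ext.

Section indep.
Context d (T : measurableType d) (R : realType) (P : probability T R).
Variables (X1 X2 Y1 Y2 : T -> R).
Hypotheses (mX1 : measurable_fun setT X1) (mX2 : measurable_fun setT X2)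
  (mY1 : measurable_fun setT Y1) (mY2 : measurable_fun setT Y2).
Hypothesis hrect : forall A1 A2 B1 B2, measurable A1 -> measurable A2 ->
  measurable B1 -> measurable B2 ->
  P (X1 @^-1` A1 `&` X2 @^-1` A2 `&` (Y1 @^-1` B1 `&` Y2 @^-1` B2)) =
  (P (X1 @^-1` A1 `&` X2 @^-1` A2) * P (Y1 @^-1` B1 `&` Y2 @^-1` B2))%E.

Let U := fun w => (X1 w, X2 w).
Let V := fun w => (Y1 w, Y2 w).
Let mU : measurable_fun setT U := measurable_fun_pair mX1 mX2.
Let mV : measurable_fun setT V := measurable_fun_pair mY1 mY2.

Let mpre (W : T -> (R * R)%type) (mW : measurable_fun setT W) S :
  measurable S -> measurable (W @^-1` S).
Proof. by move=> mS; rewrite -(setTI (W @^-1` S)); exact: mW. Qed.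

Let step1 B1 B2 : measurable B1 -> measurable B2 -> forall S, measurable S ->
  P (U @^-1` S `&` V @^-1` (B1 `*` B2)) = (P (U @^-1` S) * P (V @^-1` (B1 `*` B2)))%E.
Proof.
move=> mB1 mB2.
have mE : measurable (V @^-1` (B1 `*` B2)) by apply: mpre => //; exact: measurableX.
set E := V @^-1` _ in mE *.
have E0 : (0 <= fine (P E))%R by apply: fine_ge0.
have PE : P E = (fine (P E))%:E.
  by rewrite fineK// ge0_fin_numE// (le_lt_trans (probability_le1 P mE))// ltry.
pose m1 := pfm (mrestr P mE) mU.
pose m2 := mscale (NngNum E0) (pfm P mU).
move=> S mS.
have := @ext_rect R m1 m2.
rewrite /m1 /m2 /= /mscale /pushforward /mrestr /= => ->//.
- by rewrite muleC -PE.
- rewrite (le_lt_trans (probability_le1 P _))// ?ltry//.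
  by apply: measurableI => //; exact: mpre.
- move=> A B mA mB; rewrite -PE muleC.
  by rewrite /pushforward /E; have h := hrect A B B1 B2 mA mB mB1 mB2; exact h.
Qed.

Lemma indep_pair S1 S2 : measurable S1 -> measurable S2 ->
  P (U @^-1` S1 `&` V @^-1` S2) = (P (U @^-1` S1) * P (V @^-1` S2))%E.
Proof.
move=> mS1 mS2.
have mE : measurable (U @^-1` S1) by exact: mpre.
set E := U @^-1` _ in mE *.
have E0 : (0 <= fine (P E))%R by apply: fine_ge0.
have PE : P E = (fine (P E))%:E.
  by rewrite fineK// ge0_fin_numE// (le_lt_trans (probability_le1 P mE))// ltry.
pose m1 := pfm (mrestr P mE) mV.
pose m2 := mscale (NngNum E0) (pfm P mV).
rewrite [in LHS]setIC.
have := @ext_rect R m1 m2.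
rewrite /m1 /m2 /= /mscale /pushforward /mrestr /= => ->//.
- by rewrite -PE.
- rewrite (le_lt_trans (probability_le1 P _))// ?ltry//.
  by apply: measurableI => //; exact: mpre.
- move=> A B mA mB; rewrite -PE setIC.
  by rewrite /pushforward /E; have h := step1 A B mA mB S1 mS1; exact h.
Qed.

End indep.

Section indep4.
Context d (T : measurableType d) (R : realType) (P : probability T R).
Variables (I : finType) (F : I -> T -> R).
Hypothesis hind : mutually_independent P F.

Lemma prod4 {t1 t2 t3 t4} : t1 != t2 -> t1 != t3 -> t1 != t4 -> t2 != t3 ->
  t2 != t4 -> t3 != t4 -> forall A1 A2 A3 A4 : set R,
  measurable A1 -> measurable A2 -> measurable A3 -> measurable A4 ->
  P (F t1 @^-1` A1 `&` F t2 @^-1` A2 `&` (F t3 @^-1` A3 `&` F t4 @^-1` A4)) =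
  (P (F t1 @^-1` A1) * P (F t2 @^-1` A2) * (P (F t3 @^-1` A3) * P (F t4 @^-1` A4)))%E.
Proof.
move=> t12 t13 t14 t23 t24 t34 A1 A2 A3 A4 m1 m2 m3 m4.
pose B t := if t == t1 then A1 else if t == t2 then A2 else
   if t == t3 then A3 else if t == t4 then A4 else setT.
have mB t : measurable (B t) by rewrite /B; repeat case: ifP.
have := hind B mB.
have t21 : (t2 == t1) = false by apply/negbTE; rewrite eq_sym.
have t31 : (t3 == t1) = false by apply/negbTE; rewrite eq_sym.
have t41 : (t4 == t1) = false by apply/negbTE; rewrite eq_sym.
have t32 : (t3 == t2) = false by apply/negbTE; rewrite eq_sym.
have t42 : (t4 == t2) = false by apply/negbTE; rewrite eq_sym.
have t43 : (t4 == t3) = false by apply/negbTE; rewrite eq_sym.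
have -> : \bigcap_(i in [set: I]) (F i @^-1` B i) =
   F t1 @^-1` A1 `&` F t2 @^-1` A2 `&` (F t3 @^-1` A3 `&` F t4 @^-1` A4).
  apply/seteqP; split => w /=.
    move=> h; have h1 := h t1 Logic.I; have h2 := h t2 Logic.I; have h3 := h t3 Logic.I; have h4 := h t4 Logic.I.
    move: h1 h2 h3 h4; rewrite /B /= eqxx t21 eqxx t31 t32 eqxx t41 t42 t43 eqxx.
    by move=> *; split; split.
  move=> [[a1 a2] [a3 a4]] i _; rewrite /B /=.
  by case: eqP => [->//|_]; case: eqP => [->//|_]; case: eqP => [->//|_];
    case: eqP => [->//|_].
move=> ->.
rewrite (bigD1 t1)//= (bigD1 t2) /=; last by rewrite eq_sym t12.
rewrite (bigD1 t3) /=; last by rewrite t31 t32.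
rewrite (bigD1 t4) /=; last by rewrite t41 t42 t43.
rewrite big1 ?mule1.
  by rewrite /B eqxx t21 eqxx t31 t32 eqxx t41 t42 t43 eqxx !muleA.
move=> i /andP[/andP[/andP[i1 i2] i3] i4].
rewrite /B (negbTE i1) (negbTE i2) (negbTE i3) (negbTE i4) preimage_setT.
exact: probability_setT.
Qed.

Lemma hrect4 t1 t2 t3 t4 : t1 != t2 -> t1 != t3 -> t1 != t4 -> t2 != t3 ->
  t2 != t4 -> t3 != t4 -> forall A1 A2 B1 B2 : set R,
  measurable A1 -> measurable A2 -> measurable B1 -> measurable B2 ->
  P (F t1 @^-1` A1 `&` F t2 @^-1` A2 `&` (F t3 @^-1` B1 `&` F t4 @^-1` B2)) =
  (P (F t1 @^-1` A1 `&` F t2 @^-1` A2) * P (F t3 @^-1` B1 `&` F t4 @^-1` B2))%E.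
Proof.
move=> t12 t13 t14 t23 t24 t34 A1 A2 A3 A4 m1 m2 m3 m4.
rewrite (prod4 t12 t13 t14 t23 t24 t34 A1 A2 A3 A4 m1 m2 m3 m4).
have := prod4 t12 t13 t14 t23 t24 t34 A1 A2 setT setT m1 m2 measurableT measurableT.
rewrite !preimage_setT !setIT probability_setT !mule1 => ->.
have := prod4 t12 t13 t14 t23 t24 t34 setT setT A3 A4 measurableT measurableT m3 m4.
by rewrite !preimage_setT !setIT !setTI probability_setT !mul1e => ->.
Qed.

End indep4.

Section covzero.
Context d (T : measurableType d) (R : realType) (P : probability T R).

Lemma Cov_shift (f g : T -> R) a b : bmf f -> bmf g ->
  Cov P (fun w => f w - a) (fun w => g w - b) = Cov P f g.
Proof.
move=> hf hg; rewrite /Cov.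
have e : (fun w => (f w - a) * (g w - b)) =
  (fun w => f w * g w + ((- b) * f w + ((- a) * g w + a * b))).
  by apply/funext => w; ring.
have hfg := bmf_mul hf hg.
have h1 : bmf (fun w => - b * f w) := bmf_scale _ hf.
have h2 : bmf (fun w => - a * g w) := bmf_scale _ hg.
have h3 : bmf (fun _ : T => a * b) := bmf_cst _.
have h4 := bmf_add h2 h3.
have h5 := bmf_add h1 h4.
rewrite e (Er_add hfg h5) (Er_add h1 h4) (Er_add h2 h3).
rewrite (Er_scale _ hf) (Er_scale _ hg) Er_cst.
rewrite (Er_add hf (bmf_cst _)) (Er_add hg (bmf_cst _)) !Er_cst; ring.
Qed.

Lemma fin_P (A : set T) : measurable A -> P A = (fine (P A))%:E.
Proof.
move=> mA; rewrite fineK// ge0_fin_numE// (le_lt_trans (probability_le1 P mA))//.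
exact: ltry.
Qed.

Lemma Cov_indic (A B : set T) a b : measurable A -> measurable B ->
  Cov P (fun w => \1_A w - a) (fun w => \1_B w - b) =
  fine (P (A `&` B)) - fine (P A) * fine (P B).
Proof.
move=> mA mB; rewrite Cov_shift; try exact: bmf_indic.
rewrite /Cov !Er_indic//.
have -> : (fun w => \1_A w * \1_B w) = (\1_(A `&` B) : T -> R).
  by rewrite indicI.
by rewrite Er_indic//; exact: measurableI.
Qed.

End covzero.

Section sgncov.
Context d (T : measurableType d) (R : realType) (P : probability T R).
Variables (I : finType) (F : I -> T -> R).
Hypothesis mF : forall t, measurable_fun setT (F t).
Hypothesis hind : mutually_independent P F.

Definition Spos (c : R) : set (R * R)%type := [set p | 0 < c + p.1 + p.2].

Lemma mSpos c : measurable (Spos c).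
Proof.
have mf : measurable_fun setT (fun p : (R * R)%type => c + p.1 + p.2).
  apply: measurable_funD; last exact: measurable_snd.
  apply: measurable_funD; first exact: measurable_cst.
  exact: measurable_fst.
have := mf measurableT _ (measurable_itv `]0, +oo[).
rewrite setTI; congr measurable; apply/seteqP; split => p /=;
  by rewrite in_itv /= andbT.
Qed.

Lemma sgnbit_indic c t1 t2 w :
  sgnbit (c + F t1 w + F t2 w) =
  \1_((fun w => (F t1 w, F t2 w)) @^-1` Spos c) w - 2^-1.
Proof.
rewrite /sgnbit /indic; case: (boolP (0 < _)) => h.
  by rewrite mem_set.
by rewrite memNset //= /Spos /=; apply/negP.
Qed.

Lemma bmf_sgnbit c t1 t2 : bmf (fun w => sgnbit (c + F t1 w + F t2 w)).
Proof.
under eq_fun do rewrite sgnbit_indic.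
apply: bmf_add; last exact: bmf_cst.
apply: bmf_indic.
rewrite -(setTI (_ @^-1` _)).
apply: (measurable_fun_pair (mF t1) (mF t2)) => //.
exact: mSpos.
Qed.

Lemma sgn_cov0 t1 t2 t3 t4 : t1 != t2 -> t1 != t3 -> t1 != t4 -> t2 != t3 ->
  t2 != t4 -> t3 != t4 -> forall c c',
  Cov P (fun w => sgnbit (c + F t1 w + F t2 w))
        (fun w => sgnbit (c' + F t3 w + F t4 w)) = 0.
Proof.
move=> t12 t13 t14 t23 t24 t34 c c'.
under eq_fun do rewrite sgnbit_indic.
under [X in Cov _ _ X]eq_fun do rewrite sgnbit_indic.
have mpre t t' S : measurable S ->
    measurable ((fun w => (F t w, F t' w)) @^-1` S).
  move=> mS; rewrite -(setTI (_ @^-1` _)).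
  exact: (measurable_fun_pair (mF t) (mF t')).
rewrite Cov_indic; [|exact: mpre (mSpos _)|exact: mpre (mSpos _)].
rewrite (@indep_pair _ _ _ P _ _ _ _ (mF t1) (mF t2) (mF t3) (mF t4)
  (@hrect4 _ _ _ P _ F hind t1 t2 t3 t4 t12 t13 t14 t23 t24 t34) _ _ (mSpos c) (mSpos c')).
rewrite fineM ?subrr// ge0_fin_numE ?(le_lt_trans (probability_le1 P _)) ?ltry//;
  exact: mpre (mSpos _).
Qed.

End sgncov.

Section trig.
Context {R : realType}.

Lemma tele (u : nat -> R) n : \sum_(k < n) (u k.+1 - u k) = u n - u 0%N.
Proof.
elim: n => [|n IH]; first by rewrite big_ord0 subrr.
by rewrite big_ord_recr /= IH; ring.
Qed.

Lemma sin_per (x : R) (n : nat) : sin (x + n%:R * (2 * pi)) = sin x.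
Proof.
elim: n => [|n IH]; first by rewrite mul0r addr0.
have := sinD2pi (x + n%:R * (2 * pi)).
rewrite IH => <-; congr sin; rewrite -mulr_natl mulrSr; ring.
Qed.

Lemma sin_perB (x : R) (n : nat) : sin (x - n%:R * (2 * pi)) = sin x.
Proof. by rewrite -(sin_per (x - n%:R * (2 * pi)) n) subrK. Qed.

Lemma cos_sum0 (N : nat) (a b : R) : sin (a / 2) != 0 ->
  (forall c, sin (a * N%:R + c) = sin c) ->
  \sum_(k < N) cos (a * k%:R + b) = 0.
Proof.
move=> s0 per.
pose u k := sin (a * k%:R + b - a / 2).
have e k : cos (a * k%:R + b) = (2 * sin (a / 2))^-1 * (u k.+1 - u k).
  rewrite /u; apply: (mulfI (_ : 2 * sin (a / 2) != 0)).
    by rewrite mulf_neq0// pnatr_eq0.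
  rewrite mulrA mulfV ?mulf_neq0 ?pnatr_eq0// mul1r.
  have -> : a * k.+1%:R + b - a / 2 = (a * k%:R + b) + a / 2.
    by rewrite -natr1; field.
  by rewrite sinD sinB; ring.
under eq_bigr do rewrite e.
rewrite -mulr_sumr tele /u mulr0 add0r.
have -> : a * N%:R + b - a / 2 = a * N%:R + (b - a / 2) by ring.
by rewrite per subrr mulr0.
Qed.

Lemma cos_sum_const (N : nat) (b : R) :
  \sum_(k < N) cos (0 * k%:R + b) = N%:R * cos b.
Proof.
under eq_bigr do rewrite mul0r add0r.
by rewrite sumr_const card_ord mulr_natl.
Qed.

Lemma sin_half_neq0 (N m m' : nat) : (m < N)%N -> (m' < N)%N -> m != m' ->
  sin ((m%:R - m'%:R) * (2 * pi) / N%:R / 2) != 0 :> R.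
Proof.
move=> mN m'N mm'.
have N0 : (0 < N%:R :> R) by rewrite ltr0n; case: N mN {m'N}.
have pi0 := pi_gt0 R.
have key (p q : nat) : (p < N)%N -> (q < p)%N ->
    0 < sin ((p%:R - q%:R) * (2 * pi) / N%:R / 2) :> R.
  move=> pN qp; apply: sin_gt0_pi.
  have -> : (p%:R - q%:R) * (2 * pi) / N%:R / 2 = ((p%:R - q%:R) / N%:R) * pi :> R.
    by field; rewrite gt_eqF.
  have h1 : 0 < p%:R - q%:R :> R by rewrite subr_gt0 ltr_nat.
  have h2 : p%:R - q%:R < N%:R :> R.
    by rewrite (le_lt_trans (_ : _ <= p%:R)) ?ltr_nat// lerBlDr lerDl.
  apply/andP; split; first by rewrite mulr_gt0// divr_gt0.
  by rewrite gtr_pMl// ltr_pdivrMr// mul1r.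
case: (ltngtP m m') => [lt|gt|eq]; last by rewrite eq eqxx in mm'.
  have := key m' m m'N lt.
  have -> : (m%:R - m'%:R) * (2 * pi) / N%:R / 2 =
     - ((m'%:R - m%:R) * (2 * pi) / N%:R / 2) :> R by ring.
  by rewrite sinN oppr_eq0 => /gt_eqF ->.
by have := key m m' mN gt => /gt_eqF ->.
Qed.

Lemma sin_per_diff (N m m' : nat) (c : R) : (0 < N)%N ->
  sin ((m%:R - m'%:R) * (2 * pi) / N%:R * N%:R + c) = sin c.
Proof.
move=> N0.
have -> : (m%:R - m'%:R) * (2 * pi) / N%:R * N%:R + c =
   c + m%:R * (2 * pi) - m'%:R * (2 * pi).
  by field; rewrite pnatr_eq0 -lt0n.
by rewrite sin_perB sin_per.
Qed.

Lemma cos_sum_diff (N m m' : nat) (b : R) : (m < N)%N -> (m' < N)%N ->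
  \sum_(k < N) cos ((m%:R - m'%:R) * (2 * pi) / N%:R * k%:R + b) =
  if m == m' then N%:R * cos b else 0.
Proof.
move=> mN m'N; case: eqP => [->|ne].
  by rewrite subrr !mul0r cos_sum_const.
apply: cos_sum0; first by apply: sin_half_neq0 => //; exact/eqP.
by move=> c; apply: sin_per_diff; case: N mN {m'N}.
Qed.

Definition th (N : nat) (k1 k2 n1 n2 : nat) : R :=
  2 * pi * ((k1 * n1 + k2 * n2)%N)%:R / N%:R.

Lemma ortho (N n1 n2 n1' n2' : nat) : (n1 < N)%N -> (n2 < N)%N ->
  (n1' < N)%N -> (n2' < N)%N ->
  \sum_(k1 < N) \sum_(k2 < N) cos (th N k1 k2 n1 n2 - th N k1 k2 n1' n2') =
  if (n1 == n1') && (n2 == n2') then (N ^ 2)%:R else 0.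
Proof.
move=> h1 h2 h1' h2'.
have e k1 k2 : th N k1 k2 n1 n2 - th N k1 k2 n1' n2' =
  (n2%:R - n2'%:R) * (2 * pi) / N%:R * k2%:R +
  (n1%:R - n1'%:R) * (2 * pi) / N%:R * k1%:R.
  by rewrite /th !natrD !natrM; ring.
under eq_bigr do under eq_bigr do rewrite e.
under eq_bigr do rewrite cos_sum_diff//.
case: (boolP (n2 == n2')) => ne; last first.
  by rewrite andbF big1.
rewrite andbT.
under eq_bigr => k _ do rewrite -[_ * k%:R]addr0.
rewrite -mulr_sumr cos_sum_diff//.
by case: eqP => _; rewrite ?cos0 ?mulr0 ?mulr1 // -natrM expnS expn1.
Qed.

End trig.

Section varalg.
Context d (T : measurableType d) (R : realType) (P : probability T R).

Lemma Cov_sym (f g : T -> R) : Cov P f g = Cov P g f.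
Proof.
rewrite /Cov mulrC; congr (Er P _ - _).
by apply/funext => w; rewrite mulrC.
Qed.

Lemma Cov_sum_l (J : finType) (a : J -> R) (f : J -> T -> R) (g : T -> R) :
  (forall i, bmf (f i)) -> bmf g ->
  Cov P (fun w => \sum_i a i * f i w) g = \sum_i a i * Cov P (f i) g.
Proof.
move=> hf hg; rewrite /Cov.
under eq_fun do rewrite mulr_suml.
rewrite Er_sum; last by move=> i; under eq_fun do rewrite -mulrA; apply: bmf_scale; exact: bmf_mul.
rewrite Er_sum; last by move=> i; exact: bmf_scale.
rewrite mulr_suml -sumrB; apply: eq_bigr => i _.
rewrite (_ : (fun w => a i * f i w * g w) = (fun w => a i * (f i w * g w))); last first.
  by apply/funext => w; rewrite mulrA.
rewrite !Er_scale//; last exact: bmf_mul.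
ring.
Qed.

Lemma Cov_sum_r (J : finType) (a : J -> R) (f : J -> T -> R) (g : T -> R) :
  (forall i, bmf (f i)) -> bmf g ->
  Cov P g (fun w => \sum_i a i * f i w) = \sum_i a i * Cov P g (f i).
Proof.
move=> hf hg; rewrite Cov_sym Cov_sum_l//; apply: eq_bigr => i _.
by rewrite Cov_sym.
Qed.

Lemma bmf_lin (J : finType) (a : J -> R) (f : J -> T -> R) :
  (forall i, bmf (f i)) -> bmf (fun w => \sum_i a i * f i w).
Proof. by move=> hf; apply: bmf_sum => i; exact: bmf_scale. Qed.

Lemma Var_sum (J : finType) (a : J -> R) (f : J -> T -> R) :
  (forall i, bmf (f i)) ->
  Var P (fun w => \sum_i a i * f i w) =
  \sum_i \sum_j a i * a j * Cov P (f i) (f j).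
Proof.
move=> hf; rewrite Var_Cov; last exact: bmf_lin.
rewrite Cov_sum_l//; last exact: bmf_lin.
apply: eq_bigr => i _; rewrite Cov_sum_r// mulr_sumr; apply: eq_bigr => j _.
by rewrite mulrA.
Qed.

Lemma Var_bound (J : finType) (a : J -> R) (f : J -> T -> R) (v : R) :
  (forall i, bmf (f i)) ->
  (forall i j, i != j -> Cov P (f i) (f j) = 0) ->
  (forall i, Var P (f i) <= v) ->
  Var P (fun w => \sum_i a i * f i w) <= v * \sum_i a i ^+ 2.
Proof.
move=> hf h0 hv; rewrite Var_sum// mulr_sumr; apply: ler_sum => i _.
rewrite (bigD1 i)//= big1 ?addr0; last first.
  by move=> j ji; rewrite h0 ?mulr0// eq_sym.
rewrite -Var_Cov// -expr2 mulrC ler_wpM2r// ?sqr_ge0 //.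
Qed.

Lemma parseval_var (N : nat) (p : ('I_N * 'I_N)%type -> T -> R) :
  (forall n, bmf (p n)) ->
  \sum_(k : 'I_N * 'I_N)
    (Var P (fun w => \sum_(n : 'I_N * 'I_N) cos (- th N k.1 k.2 n.1 n.2) * p n w) +
     Var P (fun w => \sum_(n : 'I_N * 'I_N) sin (- th N k.1 k.2 n.1 n.2) * p n w)) =
  (N ^ 2)%:R * \sum_n Var P (p n).
Proof.
move=> hp.
pose J := ('I_N * 'I_N)%type.
transitivity (\sum_(k : J) \sum_(n : J) \sum_(n' : J)
   (cos (- th N k.1 k.2 n.1 n.2) * cos (- th N k.1 k.2 n'.1 n'.2) +
    sin (- th N k.1 k.2 n.1 n.2) * sin (- th N k.1 k.2 n'.1 n'.2)) * Cov P (p n) (p n')).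
  apply: eq_bigr => k _; rewrite !Var_sum// -big_split; apply: eq_bigr => n _.
  by rewrite -big_split; apply: eq_bigr => n' _ /=; ring.
rewrite exchange_big /=; under eq_bigr do rewrite exchange_big /=.
rewrite mulr_sumr; apply: eq_bigr => n _.
transitivity (\sum_(n' : J) Cov P (p n) (p n') *
   (if n == n' then (N ^ 2)%:R else 0)).
  apply: eq_bigr => n' _; rewrite -mulr_suml mulrC; congr (_ * _).
  transitivity (\sum_(k : J) cos (th (R:=R) N k.1 k.2 n.1 n.2 - th N k.1 k.2 n'.1 n'.2)).
    apply: eq_bigr => k _; rewrite -cosB -cosN; congr cos; ring.
  rewrite -(pair_bigA _ (fun (k1 k2 : 'I_N) => cos (th (R:=R) N k1 k2 n.1 n.2 - th N k1 k2 n'.1 n'.2))) /=.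
  rewrite ortho//; case: n n' => [n1 n2] [n1' n2'] /=.
rewrite (bigD1 n)//= eqxx big1 ?addr0; last first.
  by move=> n' /negbTE; rewrite eq_sym => ->; rewrite mulr0.
by rewrite -Var_Cov// mulrC.
Qed.


End varalg.

Section cplx.
Context {R : realType}.

Lemma Re_add (x y : R[i]) : complex.Re (x + y) = complex.Re x + complex.Re y.
Proof. by case: x; case: y. Qed.
Lemma Im_add (x y : R[i]) : complex.Im (x + y) = complex.Im x + complex.Im y.
Proof. by case: x; case: y. Qed.

Lemma Re_sum (I : Type) (s : seq I) (F : I -> R[i]) :
  complex.Re (\sum_(i <- s) F i) = \sum_(i <- s) complex.Re (F i).
Proof.
elim: s => [|a s IH]; first by rewrite !big_nil.
by rewrite !big_cons Re_add IH.
Qed.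

Lemma Im_sum (I : Type) (s : seq I) (F : I -> R[i]) :
  complex.Im (\sum_(i <- s) F i) = \sum_(i <- s) complex.Im (F i).
Proof.
elim: s => [|a s IH]; first by rewrite !big_nil.
by rewrite !big_cons Im_add IH.
Qed.

Lemma Re_mul_expi (z : R[i]) t :
  complex.Re (z * expi t) = complex.Re z * cos t - complex.Im z * sin t.
Proof. by case: z. Qed.

Lemma Im_mul_expi (z : R[i]) t :
  complex.Im (z * expi t) = complex.Re z * sin t + complex.Im z * cos t.
Proof. by case: z => a b /=; ring. Qed.

Lemma Re_scal (c : R) (z : R[i]) : complex.Re ((c%:C)%C * z) = c * complex.Re z.
Proof. by case: z => a b /=; ring. Qed.

Lemma clip_lip (x y : R) : (clip x - clip y) ^+ 2 <= (x - y) ^+ 2.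
Proof.
rewrite /clip /Num.min /Num.max.
case: (ltP 0 x) => ?; case: (ltP 0 y) => ?;
  case: (ltP 255 x) => ?; case: (ltP 255 y) => ?; case: (ltP (255:R) 0) => ?;
  have := sqr_ge0 (x - y); rewrite ?expr2 => ?; nra.
Qed.

Lemma clip_bound (x : R) : `|clip x| <= 255.
Proof.
rewrite /clip /Num.min /Num.max.
case: (ltP 0 x) => ?; case: (ltP 255 x) => ?; case: (ltP (255:R) 0) => ?;
  rewrite ?ger0_norm; lra.
Qed.

Lemma clip0 : clip (0 : R) = 0.
Proof. by rewrite /clip /Num.min /Num.max ltxx; case: (ltP (255:R) 0) => ?; lra. Qed.

End cplx.

Section clipvar.
Context d (T : measurableType d) (R : realType) (P : probability T R).

Lemma bmf_clip {u : T -> R} : bmf u -> bmf (fun w => clip (u w)).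
Proof.
move=> [mu _]; split; last by exists 255 => w; exact: clip_bound.
apply: (measurable_minr (f := fun _ => 255)); first exact: measurable_cst.
apply: (measurable_maxr (f := fun _ => 0)) => //; exact: measurable_cst.
Qed.

Lemma Var_clip {u : T -> R} : bmf u -> Var P (fun w => clip (u w)) <= Var P u.
Proof.
move=> hu; have h := Var_le (P:=P) (clip (Er P u)) (bmf_clip hu). apply: (le_trans h).
rewrite /Var; apply: Er_le => //.
- by under eq_fun do rewrite expr2; apply: bmf_mul; apply: bmf_add;
    [exact: bmf_clip|exact: bmf_cst|exact: bmf_clip|exact: bmf_cst].
- by under eq_fun do rewrite expr2; apply: bmf_mul; apply: bmf_add;
    [|exact: bmf_cst| |exact: bmf_cst].
- by move=> w; exact: clip_lip.
Qed.

End clipvar.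

Lemma sum_pair (R : realType) (I J : finType) (F : (I * J)%type -> R) :
  \sum_(p : I * J) F p = \sum_i \sum_j F (i, j).
Proof.
rewrite (pair_bigA _ (fun i j => F (i, j))); apply: eq_bigr => -[i j] //.
Qed.

Section uvar.
Context d (T : measurableType d) (R : realType) (P : probability T R).
Variables (N : nat) (WR WI dR dI : 'I_N -> 'I_N -> T -> R) (gt : 'M[R[i]]_N).
Hypothesis mNF : forall t, measurable_fun setT (noise_family WR WI dR dI t).
Hypothesis hind : mutually_independent P (noise_family WR WI dR dI).

Let NF := noise_family WR WI dR dI.
Let o0 : 'I_4 := @Ordinal 4 0 isT.
Let o1 : 'I_4 := @Ordinal 4 1 isT.
Let o2 : 'I_4 := @Ordinal 4 2 isT.
Let o3 : 'I_4 := @Ordinal 4 3 isT.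

Definition zf (j : bool * ('I_N * 'I_N)) : T -> R :=
  let: (b, (k1, k2)) := j in
  if b then fun w => sgnbit (complex.Im (gt k1 k2) + NF (o1, k1, k2) w + NF (o3, k1, k2) w)
  else fun w => sgnbit (complex.Re (gt k1 k2) + NF (o0, k1, k2) w + NF (o2, k1, k2) w).

Lemma bmf_zf j : bmf (zf j).
Proof. by case: j => [[] [k1 k2]]; apply: bmf_sgnbit. Qed.

Let neo (o o' : 'I_4) (a b a' b' : 'I_N) : val o != val o' -> (o, a, b) != (o', a', b').
Proof. by move=> h; apply/eqP => -[e _ _]; rewrite e eqxx in h. Qed.

Let nek (o : 'I_4) (a b a' b' : 'I_N) : (a, b) != (a', b') -> (o, a, b) != (o, a', b').
Proof. by move=> h; apply/eqP => -[e1 e2]; rewrite e1 e2 eqxx in h. Qed.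

Lemma zf_cov0 i j : i != j -> Cov P (zf i) (zf j) = 0.
Proof.
case: i => [b [k1 k2]]; case: j => [b' [k1' k2']] ij.
have kk : (b = b') -> (k1, k2) != (k1', k2').
  by move=> e; apply: contraNneq ij => ->; rewrite e.
case: b b' kk {ij} => [] [] kk /=; apply: sgn_cov0 => //;
  try (apply: neo; done); apply: nek; exact: kk.
Qed.

Lemma sgnbit_sq (x : R) : (sgnbit x - 0) ^+ 2 = 4^-1.
Proof. by rewrite /sgnbit subr0; case: ifP => _; field. Qed.

Lemma zf_var j : Var P (zf j) <= 4^-1.
Proof.
apply: (le_trans (Var_le 0 (bmf_zf j))).
case: j => [[] [k1 k2]] /=; under eq_fun do rewrite sgnbit_sq; by rewrite Er_cst.
Qed.

Definition acoef (n1 n2 : 'I_N) (j : bool * ('I_N * 'I_N)) : R :=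
  let: (b, (k1, k2)) := j in
  if b then - ((N ^ 2)%:R^-1 * sin (th N k1 k2 n1 n2))
  else (N ^ 2)%:R^-1 * cos (th N k1 k2 n1 n2).

Lemma u_repr n1 n2 w :
  complex.Re (idft2 (Xtilde gt WR WI dR dI w) n1 n2) =
  \sum_(j : bool * ('I_N * 'I_N)) acoef n1 n2 j * zf j w.
Proof.
rewrite mxE Re_scal Re_sum.
rewrite sum_pair big_bool /= !sum_pair.
rewrite /= -big_split mulr_sumr; apply: eq_bigr => k1 _.
rewrite Re_sum -big_split mulr_sumr; apply: eq_bigr => k2 _ /=.
rewrite Re_mul_expi !mxE /= /th; ring.
Qed.

Lemma u_var n1 n2 : (0 < N)%N ->
  Var P (fun w => complex.Re (idft2 (Xtilde gt WR WI dR dI w) n1 n2)) <=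
  4^-1 * (N ^ 2)%:R^-1.
Proof.
move=> N0.
under eq_fun do rewrite u_repr.
apply: (le_trans (@Var_bound _ _ _ P _ (acoef n1 n2) zf _ bmf_zf zf_cov0 zf_var)).
rewrite ler_wpM2l//.
rewrite sum_pair big_bool /=.
rewrite -big_split /=.
rewrite (eq_bigr (fun _ => (N ^ 2)%:R^-1 ^+ 2)); last first.
  move=> [k1 k2] _ /=; rewrite sqrrN !exprMn -mulrDr.
  by rewrite addrC cos2Dsin2 mulr1.
have N2 : ((N ^ 2)%:R : R) != 0 by rewrite pnatr_eq0 expn_eq0 andbT -lt0n.
by rewrite sumr_const card_prod card_ord mulnn -[X in X <= _]mulr_natr expr2 -mulrA mulVf // mulr1 lexx.
Qed.

End uvar.

Lemma sum_lt (R : realType) (N M : nat) (x : R) :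
  \sum_(i < N) (if (i < M)%N then x else 0) = (minn N M)%:R * x.
Proof.
elim: N => [|N IH]; first by rewrite big_ord0 min0n mul0r.
rewrite big_ord_recr /= IH.
case: (ltnP N M) => h.
  have -> : minn N.+1 M = N.+1 by lia.
  by rewrite -natr1 mulrDl mul1r.
have -> : minn N.+1 M = M by lia.
by rewrite addr0.
Qed.

Lemma count_blk (R : realType) (N M : nat) (v : R) : (M <= N)%N ->
  \sum_(n : 'I_N * 'I_N) (if (n.1 < M)%N && (n.2 < M)%N then v else 0) =
  (M * M)%:R * v.
Proof.
move=> MN; rewrite sum_pair /=.
transitivity (\sum_(i < N) (if (i < M)%N then \sum_(j < N)
   (if (j < M)%N then v else 0) else 0)).
  apply: eq_bigr => i _; case: (i < M)%N => //=.
  by rewrite big1.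
rewrite sum_lt sum_lt.
have -> : minn N M = M by lia.
by rewrite natrM mulrA.
Qed.

Theorem lemma6 (R : realType) (mu : probability R R)
  (mu_sym : symmetric_law mu)
  (mu_int : mu.-integrable setT (fun x : R => x%:E))
  (mu_mean0 : (\int[mu]_x x%:E = 0)%E)
  (sigma : R) (sigma_gt0 : 0 < sigma) :
  exists C : R, forall (M N : nat), (0 < M)%N -> (2 * M < N)%N ->
  forall g : 'M[R]_N,
    (forall i j : 'I_N, 0 <= g i j <= 255) ->
    (forall i j : 'I_N, ~~ ((i < M) && (j < M))%N -> g i j = 0) ->
  forall (d : measure_display) (T : measurableType d) (P : probability T R)
         (WR WI dR dI : 'I_N -> 'I_N -> T -> R),
    (forall t, measurable_fun setT (noise_family WR WI dR dI t)) ->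
    mutually_independent P (noise_family WR WI dR dI) ->
    (forall i j A, measurable A -> P (WR i j @^-1` A) = mu A) ->
    (forall i j A, measurable A -> P (WI i j @^-1` A) = mu A) ->
    (forall i j A, measurable A -> P (dR i j @^-1` A) = normal_prob 0 sigma A) ->
    (forall i j A, measurable A -> P (dI i j @^-1` A) = normal_prob 0 sigma A) ->
    ((((N ^ 2)%:R)^-1)%:E *
       (\sum_(k1 < N) \sum_(k2 < N)
          (cvariance P (fun w => Qop M (Xtilde (img_dft g) WR WI dR dI w) k1 k2)))
     <= (C * ((M ^ 2)%:R / (N ^ 2)%:R))%:E)%E.
Proof.
exists 4^-1.
move=> M N M0 MN g _ _ d T P WR WI dR dI mNF hind _ _ _ _.
have N0 : (0 < N)%N by lia.
have MleN : (M <= N)%N by lia.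
pose gt := img_dft g.
pose p (n : 'I_N * 'I_N) (w : T) :=
  clip (complex.Re (proj_blk M (idft2 (Xtilde gt WR WI dR dI w)) n.1 n.2)).
have ReQ k1 k2 w : complex.Re (Qop M (Xtilde gt WR WI dR dI w) k1 k2) =
    \sum_(n : 'I_N * 'I_N) cos (- th N k1 k2 n.1 n.2) * p n w.
  rewrite /Qop /dft2 mxE Re_sum sum_pair; apply: eq_bigr => n1 _.
  rewrite Re_sum; apply: eq_bigr => n2 _.
  by rewrite Re_mul_expi /clip_img mxE /= /th mul0r subr0 mulrC.
have ImQ k1 k2 w : complex.Im (Qop M (Xtilde gt WR WI dR dI w) k1 k2) =
    \sum_(n : 'I_N * 'I_N) sin (- th N k1 k2 n.1 n.2) * p n w.
  rewrite /Qop /dft2 mxE Im_sum sum_pair; apply: eq_bigr => n1 _.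
  rewrite Im_sum; apply: eq_bigr => n2 _.
  by rewrite Im_mul_expi /clip_img mxE /= /th mul0r addr0 mulrC.
have pblk (n : 'I_N * 'I_N) : (n.1 < M)%N && (n.2 < M)%N -> p n =
    (fun w => clip (complex.Re (idft2 (Xtilde gt WR WI dR dI w) n.1 n.2))).
  by move=> h; apply/funext => w; rewrite /p /proj_blk mxE h.
have pnblk (n : 'I_N * 'I_N) : ~~ ((n.1 < M)%N && (n.2 < M)%N) -> p n = (fun _ => 0).
  by move=> h; apply/funext => w; rewrite /p /proj_blk mxE (negbTE h) clip0.
have bp (n : 'I_N * 'I_N) : bmf (p n).
  case: (boolP ((n.1 < M)%N && (n.2 < M)%N)) => h.
    rewrite pblk//; apply: bmf_clip.
    under eq_fun do rewrite u_repr.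
    apply: bmf_lin => j; by apply: bmf_zf.
  by rewrite pnblk//; exact: bmf_cst.
have vp (n : 'I_N * 'I_N) : Var P (p n) <=
    (if (n.1 < M)%N && (n.2 < M)%N then 4^-1 * (N ^ 2)%:R^-1 else 0).
  case: (boolP ((n.1 < M)%N && (n.2 < M)%N)) => h.
    have bu : bmf (fun w => complex.Re (idft2 (Xtilde gt WR WI dR dI w) n.1 n.2)).
      under eq_fun do rewrite u_repr.
      apply: bmf_lin => j; by apply: bmf_zf.
    rewrite pblk//; apply: (le_trans (@Var_clip _ _ _ P _ bu)).
    exact: u_var.
  by rewrite pnblk// /Var Er_cst /= Er_cst subrr expr0n /= lexx.
have cv k1 k2 : cvariance P (fun w => Qop M (Xtilde gt WR WI dR dI w) k1 k2) =
   (Var P (fun w => \sum_(n : 'I_N * 'I_N) cos (- th N k1 k2 n.1 n.2) * p n w) +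
    Var P (fun w => \sum_(n : 'I_N * 'I_N) sin (- th N k1 k2 n.1 n.2) * p n w))%:E.
  rewrite /cvariance.
  under eq_fun do rewrite ReQ.
  under [X in (_ + 'V_P[X])%E]eq_fun do rewrite ImQ.
  by rewrite !VarE ?EFinD//; apply: bmf_lin.
under eq_bigr do under eq_bigr do rewrite cv.
under eq_bigr do rewrite sumEFin.
rewrite sumEFin -EFinM lee_fin.
have -> : \sum_(k1 < N) \sum_(k2 < N)
   (Var P (fun w => \sum_(n : 'I_N * 'I_N) cos (- th N k1 k2 n.1 n.2) * p n w) +
    Var P (fun w => \sum_(n : 'I_N * 'I_N) sin (- th N k1 k2 n.1 n.2) * p n w)) =
  \sum_(k : 'I_N * 'I_N)
   (Var P (fun w => \sum_(n : 'I_N * 'I_N) cos (- th N k.1 k.2 n.1 n.2) * p n w) +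
    Var P (fun w => \sum_(n : 'I_N * 'I_N) sin (- th N k.1 k.2 n.1 n.2) * p n w)).
  by rewrite sum_pair.
rewrite parseval_var//.
have N2 : ((N ^ 2)%:R : R) != 0 by rewrite pnatr_eq0 expn_eq0 andbT -lt0n.
rewrite mulrA mulVf// mul1r.
apply: le_trans (ler_sum _ (fun n _ => vp n)) _.
rewrite count_blk// mulnn.
by rewrite mulrCA mulrA.
Qed.
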